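(* Fix $a\in(0,1/2)$ and $b\in(0,1)$. There exist constants $c_1>0$ and $c_2>0$ (independent of $n$) such that for all sufficiently large $n$ of the form $n=2^{h+1}-1$, the random-neighbor variant process on the full binary tree with $n$ vertices, rooted at its root, satisfies $\Pr[\tau_{\mathrm{conv}}\ge c_2n]\ge c_1a$.
   Context: Random-neighbor variant. Fix $a,b\in[0,1]$, a connected graph $G=(V,E)$ and a root $r$. Labels $f_t:V\to\{+1,-1,\bot\}$ with $f_t(r)=+1$ for all $t$ and $f_0(v)=\bot$ for $v\ne r$. For $t\ge1$ and each $v\neq r$ independently, let $N_{t-1}(v)=\{u:(u,v)\in E,\ f_{t-1}(u)\ne\bot\}$. If $f_{t-1}(v)=\bot$ and $N_{t-1}(v)=\emptyset$, then $f_t(v)=\bot$. If $f_{t-1}(v)=\bot$ and $N_{t-1}(v)\neq\emptyset$, pick $w$ uniformly from $N_{t-1}(v)$ and set $f_t(v)=f_{t-1}(w)$ w.p. $1-a$ and $-f_{t-1}(w)$ w.p. $a$. If $f_{t-1}(v)\ne\bot$, pick $w$ uniformly at random from $N_{t-1}(v)$ (afresh every round) and set $f_t(v)=f_{t-1}(w)$ w.p. $b$ and $f_t(v)=f_{t-1}(v)$ w.p. $1-b$. The convergence time is $\tau_{\mathrm{conv}}=\min\{t: f_t(v)=+1\ \forall v\in V\}$. The full binary tree of height $h$ has $2^{h+1}-1$ vertices; every non-leaf vertex has exactly two children and all leaves are at distance $h$ from the root. *)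

(* Defs.v *)
(* Random-neighbor variant of the broadcasting/labelling
   process, as a finite-state Markov chain with explicit transition
   probabilities; the law of tau_conv is computed from the chain. *)
From HB Require Import structures.
From mathcomp Require Import all_boot all_order all_algebra.
From mathcomp Require Import reals.
Set Implicit Arguments. Unset Strict Implicit. Unset Printing Implicit Defensive.
Import Order.TTheory GRing.Theory Num.Theory.
Local Open Scope ring_scope.

(* Labels: Some true = +1, Some false = -1, None = bottom. *)
Definition state (V : finType) := {ffun V -> option bool}.

Section Process.
Variables (R : realFieldType) (V : finType) (adj : rel V) (r : V) (a b : R).

Definition nbrs (f : state V) (v : V) : {set V} :=
  [set u | adj u v & f u != None].

Definition frac (f : state V) (v : V) (s : bool) : R :=
  #|[set u in nbrs f v | f u == Some s]|%:R / #|nbrs f v|%:R.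

(* probability that f_t(v) = y given f_{t-1} = f *)
Definition step_prob (f : state V) (v : V) (y : option bool) : R :=
  if v == r then (y == Some true)%:R else
  match f v with
  | None =>
      if nbrs f v == set0 then (y == None)%:R else
      match y with
      | None => 0
      | Some s => (1 - a) * frac f v s + a * frac f v (~~ s)
      end
  | Some x =>
      (* a labelled vertex always has a labelled neighbour along reachable
         trajectories; the empty case is irrelevant and we let it keep x *)
      if nbrs f v == set0 then (y == Some x)%:R else
      match y with
      | None => 0
      | Some s => b * frac f v s + (1 - b) * (x == s)%:R
      end
  end.

(* vertices update independently *)
Definition trans (f g : state V) : R := \prod_(v : V) step_prob f v (g v).

Definition init_state : state V :=
  [ffun v => if v == r then Some true else None].

Definition all_plus (f : state V) : bool := [forall v, f v == Some true].

(* surv_dist t g = Pr[ f_t = g  and  f_s is not all +1 for every s < t ] *)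
Fixpoint surv_dist (t : nat) : state V -> R :=
  match t with
  | 0 => fun g => (g == init_state)%:R
  | t'.+1 => fun g =>
      \sum_(f : state V) (~~ all_plus f)%:R * surv_dist t' f * trans f g
  end.

(* Pr[ tau_conv >= t ] = Pr[ f_s is not all +1 for every s < t ] *)
Definition prob_tau_ge (t : nat) : R := \sum_(g : state V) surv_dist t g.

End Process.

(* Full binary tree of height h in heap numbering: vertices 0 .. 2^(h+1)-2,
   root 0, children of u are 2u+1 and 2u+2. *)
Definition btn (h : nat) : nat := (2 ^ h.+1).-1.

Lemma btn_gt0 h : (0 < btn h)%N.
Proof. by rewrite /btn -ltnS prednK ?expn_gt0 // (ltn_exp2l 0). Qed.

Definition bt_root (h : nat) : 'I_(btn h) := Ordinal (btn_gt0 h).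

Definition bt_adj (h : nat) : rel 'I_(btn h) :=
  fun u v => [|| val v == (val u).*2.+1, val v == (val u).*2.+2,
                 val u == (val v).*2.+1 | val u == (val v).*2.+2].
Arguments bt_adj h : clear implicits.
Arguments bt_root h : clear implicits.

(* Main.v *)
Require Import Defs.
From HB Require Import structures.
From mathcomp Require Import all_boot all_order all_algebra.
From mathcomp Require Import reals ring lra zify.
Set Implicit Arguments. Unset Strict Implicit. Unset Printing Implicit Defensive.
Import Order.TTheory GRing.Theory Num.Theory.
Local Open Scope ring_scope.

Section Gen.
Variables (R : realFieldType) (V : finType) (adj : rel V) (r : V) (a b : R).
Local Notation fr := (@Defs.frac R V adj).
Local Notation N := (nbrs adj).
Hypotheses (a0 : 0 <= a) (a1 : a <= 1) (b0 : 0 <= b) (b1 : b <= 1).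

Lemma sum_opt (F : option bool -> R) :
  \sum_(y : option bool) F y = F None + F (Some true) + F (Some false).
Proof.
rewrite (bigD1 None) //= (bigD1 (Some true)) //= (bigD1 (Some false)) //=.
rewrite big1 ?addr0 ?addrA // => -[[]|] //=.
Qed.

Lemma frac_ge0 f v s : 0 <= fr f v s.
Proof. by rewrite /frac divr_ge0. Qed.

Lemma frac_sum f v : N f v != set0 -> fr f v true + fr f v false = 1.
Proof.
move=> ne; rewrite /Defs.frac -mulrDl -natrD.
have -> : (#|[set u in N f v | f u == Some true]| +
          #|[set u in N f v | f u == Some false]| = #|N f v|)%N.
  rewrite -(cardsID [set u | f u == Some true] (N f v)); congr (_ + _).
    by apply: eq_card => u; rewrite !inE.
  apply: eq_card => u; rewrite !inE; case: (f u) => [[]|] //=; rewrite ?andbF ?andbT //.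
by rewrite divff // pnatr_eq0 cards_eq0.
Qed.

Lemma step_ge0 f v y : 0 <= step_prob adj r a b f v y.
Proof.
rewrite /step_prob; case: (v == r) => //; case: (f v) => [x|];
 case: (_ == set0) => //; case: y => // s;
 by rewrite addr_ge0 // mulr_ge0 ?frac_ge0 ?subr_ge0.
Qed.

Lemma step_sum f v : \sum_y step_prob adj r a b f v y = 1.
Proof.
rewrite sum_opt /step_prob; case: (v == r) => /=; first by rewrite add0r addr0.
case: (f v) => [x|]; case: ifP => [_|/negbT ne] /=.
- by case: x; rewrite ?add0r ?addr0.
- have := frac_sum ne => /(canRL (addrK _)) ->.
  by case: x => /=; ring.
- by rewrite !addr0.
- have := frac_sum ne => /(canRL (addrK _)) ->.
  ring.
Qed.

Lemma trans_sum f : \sum_g trans adj r a b f g = 1.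
Proof.
rewrite /trans -(@bigA_distr_bigA _ 0 1 *%R +%R) /=.
by rewrite big1 // => v _; apply: step_sum.
Qed.

Lemma trans_E f v y0 :
  \sum_g trans adj r a b f g * (g v == y0)%:R = step_prob adj r a b f v y0.
Proof.
pose F u y := if u == v then step_prob adj r a b f u y * (y == y0)%:R
              else step_prob adj r a b f u y.
transitivity (\sum_(g : state V) \prod_u F u (g u)).
  apply: eq_bigr => g _; rewrite /trans (bigD1 v) //= [in RHS](bigD1 v) //=.
  rewrite /F eqxx -mulrA [_ * (_ == _)%:R]mulrC mulrA; congr (_ * _).
  by apply: eq_bigr => u /negbTE ->.
rewrite -(@bigA_distr_bigA _ 0 1 *%R +%R) /= (bigD1 v) //= [X in _ * X]big1 ?mulr1.
  rewrite /F eqxx (bigD1 y0) //= eqxx mulr1 big1 ?addr0 // => y /negbTE ->.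
  by rewrite mulr0.
by move=> u /negbTE uv; rewrite /F uv step_sum.
Qed.

Lemma surv_ge0 t g : 0 <= surv_dist adj r a b t g.
Proof.
elim: t g => [|t IH] g /=; first by rewrite ler0n.
apply: sumr_ge0 => f _; rewrite !mulr_ge0 ?ler0n //.
by rewrite /trans prodr_ge0 // => v _; apply: step_ge0.
Qed.

Lemma trans_ge0 f g : 0 <= trans adj r a b f g.
Proof. by rewrite /trans prodr_ge0 // => v _; apply: step_ge0. Qed.

Lemma surv_step t (phi : state V -> R) :
  \sum_g surv_dist adj r a b t.+1 g * phi g =
  \sum_f (~~ all_plus f)%:R * surv_dist adj r a b t f *
     \sum_g trans adj r a b f g * phi g.
Proof.
rewrite /=; under eq_bigr => g _ do rewrite mulr_suml.
rewrite exchange_big /=; apply: eq_bigr => f _.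
by rewrite mulr_sumr; apply: eq_bigr => g _; rewrite mulrA.
Qed.

Lemma mass_le t : \sum_g surv_dist adj r a b t.+1 g <= \sum_g surv_dist adj r a b t g.
Proof.
have := surv_step t (fun _ => 1); under eq_bigr => g _ do rewrite mulr1.
move=> ->; apply: ler_sum => f _.
under eq_bigr => g _ do rewrite mulr1.
rewrite trans_sum mulr1; case: (all_plus f) => /=; rewrite ?mul0r ?mul1r //.
exact: surv_ge0.
Qed.

Lemma mass_le1 t : \sum_g surv_dist adj r a b t g <= 1.
Proof.
elim: t => [|t IH]; last exact: le_trans (mass_le t) IH.
rewrite /= (bigD1 (init_state r)) //= eqxx big1 ?addr0 // => g /negbTE ->//.
Qed.

Lemma mass_mono s t : (s <= t)%N ->
  \sum_g surv_dist adj r a b t g <= \sum_g surv_dist adj r a b s g.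
Proof.
move=> /subnK <-; elim: (t - s)%N => [|k IH] //=.
exact: le_trans (mass_le _) IH.
Qed.

End Gen.

Section Gen2.
Variables (R : realFieldType) (V : finType) (adj : rel V) (r : V) (a b : R).

Lemma trans_Elin f (w : V -> R) y0 :
  \sum_g trans adj r a b f g * (\sum_v w v * (g v == y0)%:R) =
  \sum_v w v * step_prob adj r a b f v y0.
Proof.
under eq_bigr => g _ do rewrite mulr_sumr.
rewrite exchange_big /=; apply: eq_bigr => v _.
rewrite -(trans_E adj r a b f v y0) mulr_sumr; apply: eq_bigr => g _.
by rewrite mulrCA.
Qed.

Lemma card_sum (P : pred V) : (#|[set u | P u]|%:R : R) = \sum_u (P u)%:R.
Proof.
rewrite -sum1_card natr_sum big_mkcond /=; apply: eq_bigr => u _.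
by rewrite inE; case: (P u).
Qed.
End Gen2.

Section Tree.
Variable h : nat.
Local Notation n := (btn h).
Local Notation V := ('I_n).
Local Notation adj := (bt_adj h).
Local Notation r := (bt_root h).

Lemma adj_bound (u v : V) : adj u v -> (val v <= (val u).*2.+2)%N.
Proof. rewrite /bt_adj => /or4P[]/eqP->; rewrite -!muln2; lia. Qed.

Lemma adj_sym (u v : V) : adj u v = adj v u.
Proof. by rewrite /bt_adj; apply/idP/idP => /or4P[]->; rewrite ?orbT. Qed.

Lemma root_val : val r = 0%N. Proof. by []. Qed.

Lemma parent_ex (v : V) : (0 < val v)%N ->
  exists p : V, [/\ adj p v & val p = (val v).-1./2].
Proof.
move=> v0; have pl : ((val v).-1./2 < n)%N.
  have : (val v < n)%N by exact: ltn_ord. have := odd_double_half (val v).-1; rewrite -!muln2; lia.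
exists (Ordinal pl); split => //; rewrite /bt_adj /=.
have := odd_double_half (val v).-1; simpl in v0 |- *.
case: (odd _) => /= e; rewrite -!muln2 in e *.
  by apply/orP; right; apply/orP; left; apply/eqP; lia.
by apply/orP; left; apply/eqP; lia.
Qed.

Lemma card_adj_le3 (v : V) : (#|[set u | adj u v]| <= 3)%N.
Proof.
have sub : [set u | adj u v] \subset
   [set u : V | val u == (val v).*2.+1] :|: [set u : V | val u == (val v).*2.+2]
   :|: [set u : V | (val v == (val u).*2.+1) || (val v == (val u).*2.+2)].
  apply/subsetP => u; rewrite !inE /bt_adj.
  by case/or4P => ->; rewrite ?orbT.
apply: leq_trans (subset_leq_card sub) _.
have c1 (P : nat -> bool) (uniqP : forall x y, P x -> P y -> x = y) :
    (#|[set u : V | P (val u)]| <= 1)%N.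
  apply/card_le1P => x; rewrite inE => px y; rewrite !inE.
  by apply/idP/eqP => [py|->//]; apply/val_inj; exact: uniqP py px.
rewrite cardsU; apply: leq_trans (leq_subr _ _) _.
have e2 : (#|[set u : V | (val v == (val u).*2.+1) || (val v == (val u).*2.+2)]| <= 1)%N.
  apply: (c1 (fun x => (val v == x.*2.+1) || (val v == x.*2.+2))).
  move=> x y /orP[] /eqP e1 /orP[] /eqP e2; rewrite -!muln2 in e1 e2; lia.
have e1 : (#|[set u : V | val u == (val v).*2.+1] :|: [set u : V | val u == (val v).*2.+2]| <= 2)%N.
  rewrite cardsU; apply: leq_trans (leq_subr _ _) _.
  rewrite -[2%N]/(1 + 1)%N leq_add //.
    by apply: (c1 (fun x => x == (val v).*2.+1)) => x y /eqP-> /eqP->.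
  by apply: (c1 (fun x => x == (val v).*2.+2)) => x y /eqP-> /eqP->.
by rewrite -[3%N]/(2 + 1)%N leq_add.
Qed.

Definition Inv t (g : state V) :=
  forall v : V, (g v != None) = (val v < (2 ^ t.+1).-1)%N.

Lemma Inv0 : Inv 0 (init_state r).
Proof.
move=> v; rewrite /init_state ffunE; have -> : (v == r) = (val v == 0%N) by [].
by case: (val v).
Qed.

Lemma step_inv (R : realFieldType) (a b : R) t f g v : Inv t f ->
  step_prob adj r a b f v (g v) != 0 -> (g v != None) = (val v < (2 ^ t.+2).-1)%N.
Proof.
move=> If; have m2 : (2 <= 2 ^ t.+1)%N by rewrite (leq_exp2l 1).
have em : (2 ^ t.+2 = (2 ^ t.+1) * 2)%N by rewrite expnS mulnC.
rewrite em /step_prob; have [->|vr] := eqVneq v r; rewrite ?eqxx ?(negbTE vr) /=.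
  case: (g r) => [y|] /=; last by rewrite ?mulr0n eqxx.
  move=> _; suff : (0 < (2 ^ t.+1 * 2).-1)%N by move=> ->.
  lia.
have vpos : (0 < val v)%N.
  by rewrite lt0n; apply: contra vr => /eqP e; apply/eqP/val_inj.
have fl := If v; case E: (f v) => [x|] in fl *.
  case: ifP => [_|ne]; case: (g v) => [y|] //=; rewrite ?eqxx ?mulr0 ?addr0 //;
  by move=> _; move: fl; case: ltnP => //; simpl; lia.
case: ifP => [/eqP ne|/negbT ne].
  case: (g v) => [y|] /=; first by rewrite mulr0n eqxx.
  move=> _; suff : ~~ (val v < (2 ^ t.+1 * 2).-1)%N by move/negbTE ->.
  apply/negP => lt.
  have [p [apv pv]] := parent_ex vpos.
  have : p \in nbrs adj f v.
    rewrite inE apv If pv /=; have := odd_double_half (val v).-1.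
    simpl in vpos, lt |- *; rewrite -!muln2 in lt |- *; lia.
  by rewrite ne inE.
case: (g v) => [y|] /=; last by rewrite eqxx.
move=> _; apply/esym.
have [u] := set0Pn _ ne; rewrite inE => /andP[auv]; rewrite If => lu.
have := adj_bound auv; simpl in lu |- *; rewrite -!muln2 => H; clear fl; lia.
Qed.

Lemma surv_inv (R : realFieldType) (a b : R) t g :
  surv_dist adj r a b t g != 0 -> Inv t g.
Proof.
elim: t g => [|t IH] g /=.
  by have [->|_] := eqVneq g (init_state r) => [_|]; [exact: Inv0|rewrite eqxx].
move=> ne.
have [f /andP [Hs Ht]] : exists f, (surv_dist adj r a b t f != 0) && (trans adj r a b f g != 0).
  apply/existsP; apply: contraR ne => /existsPn H; rewrite big1 // => f _.
  have := H f; rewrite negb_and !negbK => /orP[] /eqP ->; by rewrite ?mulr0 ?mul0r.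
have If := IH _ Hs; move=> v.
by apply: (step_inv If); move/prodf_neq0: Ht; apply.
Qed.

End Tree.

Section Pot.
Variables (h : nat) (R : realFieldType) (a b : R).
Hypotheses (a0 : 0 <= a) (a1 : a <= 2^-1) (b0 : 0 <= b) (b1 : b <= 1).
Local Notation n := (btn h).
Local Notation V := ('I_n).
Local Notation adj := (bt_adj h).
Local Notation r := (bt_root h).
Local Notation p := (step_prob adj r a b).

Definition deg (v : V) := #|[set u | adj u v]|.

Definition Psi (g : state V) : R := \sum_v (deg v)%:R * (g v == Some false)%:R.

Lemma a_le1 : a <= 1.
Proof. apply: le_trans a1 _; rewrite invf_le1 //; lra. Qed.

Lemma deg_le3 v : (deg v <= 3)%N. Proof. exact: card_adj_le3. Qed.

Lemma Psi_le g : Psi g <= 3 * n%:R.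
Proof.
rewrite /Psi -[n in X in _ <= _ * X%:R]card_ord -sum1_card natr_sum mulr_sumr.
apply: ler_sum => v _; rewrite mulr1.
have := deg_le3 v; rewrite -(ler_nat R) => d3.
by case: (_ == _); rewrite ?mulr1 ?mulr0 // (le_trans _ d3).
Qed.

Lemma Psi_ge0 g : 0 <= Psi g.
Proof. by apply: sumr_ge0 => v _; rewrite mulr_ge0. Qed.

Lemma Psi_allplus g : all_plus g -> Psi g = 0.
Proof.
move=> /forallP ap; rewrite /Psi big1 // => v _; by rewrite (eqP (ap v)) mulr0.
Qed.

Lemma leaf_count :
  \sum_(v : V) (((2 ^ h).-1 <= val v)%N)%:R = (2 ^ h)%:R :> R.
Proof.
have e1 : (n = (2 ^ h).*2.-1)%N by rewrite /btn expnS mul2n.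
have h1 : (1 <= 2 ^ h)%N by rewrite expn_gt0.
rewrite -(big_mkord xpredT (fun i => (((2 ^ h).-1 <= i)%N)%:R)).
rewrite (big_cat_nat (n := (2 ^ h).-1)) //=; last by rewrite e1 -muln2; lia.
rewrite big_nat_cond big1 ?add0r; last first.
  by move=> i /andP[/andP[_ lt] _]; rewrite leqNgt lt.
rewrite big_nat_cond (eq_bigr (fun _ => 1)); last first.
  by move=> i /andP[/andP[-> _] _].
rewrite -big_nat_cond sumr_const_nat; congr (_%:R); rewrite e1 -muln2; lia.
Qed.

Lemma leaf_bound f : (1 <= h)%N -> Inv h.-1 f ->
  a * (2 ^ h)%:R <= \sum_v (deg v)%:R * p f v (Some false).
Proof.
move=> h1 If; rewrite -leaf_count mulr_sumr; apply: ler_sum => v _.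
case: leqP => L; last by rewrite mulr0 mulr_ge0 ?step_ge0 ?a_le1.
rewrite mulr1.
have e1 : (n = (2 ^ h).*2.-1)%N by rewrite /btn expnS mul2n.
have h2 : (2 <= 2 ^ h)%N by rewrite (leq_exp2l 1).
have vlt : (val v < (2 ^ h).*2.-1)%N by rewrite -e1; exact: ltn_ord.
have vpos : (0 < val v)%N by move: L; simpl; lia.
have vr : v != r by apply: contraTneq vpos => ->.
have E : f v = None.
  case E: (f v) => [x|] //; move: (If v); rewrite E prednK //=.
  by move/esym; rewrite ltnNge L.
have [pa [apv pv]] := parent_ex vpos.
have ne : nbrs adj f v != set0.
  apply/set0Pn; exists pa; rewrite inE apv If prednK // pv.
  have := odd_double_half (val v).-1; simpl in vlt, vpos |- *; rewrite -!muln2 in vlt |- *; lia.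
have d1 : 1 <= (deg v)%:R :> R.
  rewrite ler1n /deg; apply: leq_trans (subset_leq_card (_ : nbrs adj f v \subset _)).
    by rewrite card_gt0.
  by apply/subsetP => u; rewrite !inE => /andP[].
rewrite /step_prob (negbTE vr) E (negbTE ne) /=.
have := frac_sum R ne; have := frac_ge0 R adj f v false.
set x := Defs.frac R adj f v false; set y := Defs.frac R adj f v true => x0 xy.
have q : a <= (1 - a) * x + a * y.
  have -> : y = 1 - x by rewrite -xy addrK.
  have a2 : 0 <= 1 - 2 * a.
    have : a * 2 <= 2^-1 * 2 by rewrite ler_pM2r.
    by rewrite mulVf ?pnatr_eq0 // => ?; lra.
  have := mulr_ge0 x0 a2; lra.
have q0 := le_trans a0 q.
by apply: le_trans q _; rewrite ler_peMl.
Qed.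

Lemma sumF_Psi (f : state V) :
  \sum_v (#|[set u | adj u v & f u == Some false]|%:R : R) = Psi f.
Proof.
under eq_bigr => v _ do rewrite (card_sum R (fun u => adj u v && (f u == Some false))).
rewrite exchange_big /Psi; apply: eq_bigr => u _.
rewrite /deg (card_sum R (fun v => adj v u)) mulr_suml; apply: eq_bigr => v _.
by rewrite adj_sym; case: (adj v u); case: (_ == _); rewrite ?mulr1 ?mulr0 ?mul1r ?mul0r.
Qed.

Lemma full_bound (f : state V) : (forall v, f v != None) ->
  Psi f - 3 <= \sum_v (deg v)%:R * p f v (Some false).
Proof.
move=> Hf.
pose F v : R := #|[set u | adj u v & f u == Some false]|%:R.
pose G v : R := b * F v + (1 - b) * ((deg v)%:R * (f v == Some false)%:R).
have FD v : F v <= (deg v)%:R.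
  rewrite ler_nat /deg; apply: subset_leq_card; apply/subsetP => u.
  by rewrite !inE => /andP[].
have A v : v != r -> (deg v)%:R * p f v (Some false) = G v.
  move=> vr; rewrite /G /step_prob (negbTE vr).
  have NE : nbrs adj f v = [set u | adj u v].
    by apply/setP => u; rewrite !inE Hf andbT.
  have Fe : #|[set u in nbrs adj f v | f u == Some false]| =
            #|[set u | adj u v & f u == Some false]|.
    by apply: eq_card => u; rewrite !inE Hf andbT.
  have := Hf v; case: (f v) => [x|] // _.
  case: ifP => [/eqP e|/negbT e].
    have d0 : deg v = 0%N by rewrite /deg -NE e cards0.
    have : F v <= 0 by rewrite -[0]/((0%N)%:R) -d0 FD.
    have := ler0n R #|[set u | adj u v & f u == Some false]|; rewrite -/(F v) => F0 F1.
    have -> : F v = 0 by apply/eqP; rewrite eq_le F1 F0.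
    by rewrite d0; ring.
  have d0 : (deg v)%:R != 0 :> R.
    by rewrite pnatr_eq0 /deg -NE cards_eq0.
  rewrite /Defs.frac Fe NE -/(deg v) -/(F v) /=.
  by field.
have Gr : G r <= 3.
  have d3 : (deg r)%:R <= 3 :> R by rewrite (ler_nat R _ 3) deg_le3.
  have i1 : (f r == Some false)%:R <= 1 :> R by case: (_ == _).
  have i0 : 0 <= (f r == Some false)%:R :> R by [].
  have Fr := FD r; have F0 : 0 <= F r by [].
  have h1 : b * F r <= b * 3 := ler_wpM2l b0 (le_trans Fr d3).
  have h2 : (deg r)%:R * (f r == Some false)%:R <= 3 :> R.
    by apply: le_trans d3; rewrite ler_piMr.
  have b1' : 0 <= 1 - b by rewrite subr_ge0.
  have h3 := ler_wpM2l b1' h2.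
  apply: le_trans (lerD h1 h3) _.
  by rewrite -mulrDl addrC subrK mul1r.
have S : \sum_v G v = Psi f.
  rewrite /G big_split /= -!mulr_sumr sumF_Psi -/(Psi f).
  by rewrite -mulrDl addrC subrK mul1r.
have E2 : \sum_v (deg v)%:R * p f v (Some false) = \sum_(v | v != r) G v.
  rewrite (bigD1 r) //= {1}/step_prob eqxx /= mulr0 add0r.
  by apply: eq_bigr => v; exact: A.
rewrite E2 -S (bigD1 r) //= addrAC gerDr subr_le0 //.
Qed.

End Pot.

Section Main.
Variables (h : nat) (R : realFieldType) (a b : R).
Hypotheses (a0 : 0 <= a) (a1 : a <= 2^-1) (b0 : 0 <= b) (b1 : b <= 1).
Local Notation n := (btn h).
Local Notation V := ('I_n).
Local Notation adj := (bt_adj h).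
Local Notation r := (bt_root h).
Local Notation mu := (surv_dist adj r a b).
Local Notation m t := (\sum_g mu t g).
Local Notation W t := (\sum_g mu t g * Psi R g).

Let a1' : a <= 1 := a_le1 a1.

Lemma not_ap t (f : state V) : (t < h)%N -> Inv t f -> ~~ all_plus f.
Proof.
move=> th If; have l : ((btn h).-1 < btn h)%N by rewrite ltn_predL btn_gt0.
apply/forallP => /(_ (Ordinal l)) /eqP e.
have := If (Ordinal l); rewrite e /=.
have : (2 ^ t.+1 <= 2 ^ h)%N by rewrite leq_exp2l.
rewrite /btn !expnS; lia.
Qed.

Lemma all_lab t (f : state V) : (h <= t)%N -> Inv t f -> forall v, f v != None.
Proof.
move=> th If v; rewrite If.
have : (2 ^ h.+1 <= 2 ^ t.+1)%N by rewrite leq_exp2l.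
have := ltn_ord v; rewrite /btn /=; lia.
Qed.

Lemma mass1 t : (t < h)%N -> m t = 1.
Proof.
elim: t => [|t IH] th.
  by rewrite /= (bigD1 (init_state r)) //= eqxx big1 ?addr0 // => g /negbTE ->.
transitivity (\sum_g mu t.+1 g * 1); first by apply: eq_bigr => g _; rewrite mulr1.
rewrite surv_step -[RHS](IH (ltnW th)); apply: eq_bigr => f _.
under eq_bigr => g _ do rewrite mulr1.
rewrite trans_sum mulr1; have [->|nz] := eqVneq (mu t f) 0; first by rewrite mulr0.
by rewrite (not_ap (ltnW th) (surv_inv nz)) mul1r.
Qed.

Let mu0 t g : 0 <= mu t g := surv_ge0 adj r a0 a1' b0 b1 t g.

Lemma W_step t :
  W t.+1 = \sum_f (~~ all_plus f)%:R * mu t f *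
             \sum_v (deg v)%:R * step_prob adj r a b f v (Some false).
Proof.
rewrite surv_step; apply: eq_bigr => f _; congr (_ * _).
exact: trans_Elin.
Qed.

Lemma W_h : (1 <= h)%N -> a * (2 ^ h)%:R <= W h.
Proof.
move=> h1; have := W_step h.-1; rewrite prednK // => ->.
apply: le_trans (_ : a * (2 ^ h)%:R * m h.-1 <= _).
  by rewrite mass1 ?mulr1 // prednK.
rewrite mulr_sumr; apply: ler_sum => f _.
have [->|nz] := eqVneq (mu h.-1 f) 0; first by rewrite !mulr0 mul0r.
have If := surv_inv nz.
rewrite (not_ap _ If) ?prednK // mul1r mulrC.
by apply: ler_wpM2l => //; apply: (leaf_bound a0 a1 b0 b1).
Qed.

Lemma W_step2 t : (h <= t)%N -> W t - 3 <= W t.+1.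
Proof.
move=> ht; rewrite W_step.
apply: le_trans (_ : W t - 3 * m t <= _).
  rewrite lerD2l lerN2 -[X in _ <= X]mulr1 ler_wpM2l //; exact: (mass_le1 adj r a0 a1' b0 b1 t).
rewrite mulr_sumr -sumrB; apply: ler_sum => f _.
have [->|nz] := eqVneq (mu t f) 0; first by rewrite !mulr0 mul0r mul0r subr0.
have If := surv_inv nz; have Hl := all_lab ht If.
case ap: (all_plus f) => /=.
  rewrite Psi_allplus // mulr0 mul0r mul0r sub0r oppr_le0.
  by rewrite mulr_ge0.
rewrite mul1r [3 * _]mulrC -mulrBr; apply: ler_wpM2l => //.
exact: (full_bound a b0 b1 Hl).
Qed.

Lemma W_lower k : (1 <= h)%N -> a * (2 ^ h)%:R - 3 * k%:R <= W (h + k).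
Proof.
move=> h1; elim: k => [|k IH]; first by rewrite mulr0 subr0 addn0 W_h.
rewrite addnS; apply: le_trans (W_step2 (leq_addr k h)).
rewrite [k.+1%:R]mulrSr mulrDr mulr1 opprD addrA lerD2r; exact: IH.
Qed.

Lemma W_le t : W t <= 3 * n%:R * m t.
Proof.
rewrite mulr_sumr; apply: ler_sum => g _; rewrite [X in X <= _]mulrC.
by apply: ler_wpM2r => //; apply: Psi_le.
Qed.

Lemma key T : (1 <= h)%N -> a * (2 ^ h)%:R - 3 * T%:R <= 3 * n%:R * m T.
Proof.
move=> h1; case: (leqP T h) => Th.
  apply: le_trans (_ : W h <= _); last first.
    apply: le_trans (W_le h) _; apply: ler_wpM2l; first by rewrite mulr_ge0.
    exact: (mass_mono adj r a0 a1' b0 b1 Th).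
  apply: le_trans (W_h h1); rewrite gerDl oppr_le0; by rewrite mulr_ge0.
apply: le_trans (W_le T).
have -> : T = (h + (T - h))%N by rewrite subnKC // ltnW.
apply: le_trans (W_lower _ h1); rewrite lerD2l lerN2 ler_wpM2l // ler_nat.
by rewrite leq_addl.
Qed.

End Main.

Unset Implicit Arguments.
Set Strict Implicit.
Theorem mainTheorem18 (R : realType) (a b : R) :
  0 < a < 2^-1 -> 0 < b < 1 ->
  exists c1 c2 : R, 0 < c1 /\ 0 < c2 /\
    exists h0 : nat, forall h : nat, (h0 <= h)%N ->
      c1 * a <= prob_tau_ge (bt_adj h) (bt_root h) a b
                  `|Num.ceil (c2 * (btn h)%:R)|%N.
Proof.
move=> /andP[a0 a1] /andP[b0 b1].
exists (12^-1), (a / 24); split; first by rewrite invr_gt0.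
split; first by rewrite divr_gt0.
have x0 : 0 <= 12 / a by rewrite divr_ge0 // ltW.
set N := Num.Def.archi_bound (12 / a).
exists N.+1 => h hN.
have h1 : (0 < h)%N by apply: leq_trans hN.
set x := a / 24 * (btn h)%:R.
set T := `|Num.ceil x|%N.
have := key (ltW a0) (ltW a1) (ltW b0) (ltW b1) T h1.
rewrite /prob_tau_ge; set m := \sum_g _ => K.
have m0 : 0 <= m by apply: sumr_ge0 => g _; apply: (surv_ge0 _ _ (ltW a0) (a_le1 (ltW a1)) (ltW b0) (ltW b1)).
set X : R := (2 ^ h)%:R.
have X1 : 1 <= X by rewrite /X ler1n expn_gt0.
have nX : (btn h)%:R <= 2 * X.
  rewrite /X -natrM ler_nat /btn expnS; lia.
have NX : (N%:R : R) <= X.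
  rewrite /X ler_nat; have := @ltn_expl 2 h isT; lia.
have aX : 12 < a * X.
  have := archi_boundP x0; rewrite -/N => H.
  have H2 : 12 / a < X := lt_le_trans H NX.
  by move: H2; rewrite ltr_pdivrMr // mulrC.
have xge0 : 0 <= x by rewrite /x mulr_ge0 // divr_ge0 // ltW.
have Tx : T%:R <= x + 1.
  rewrite /T natr_absz ger0_norm ?ceil_ge0; last by apply: lt_le_trans xge0; rewrite ltrN10.
  have := ceilB1_lt x; rewrite intrB; lra.
have x2 : x <= a / 24 * (2 * X) by rewrite /x ler_wpM2l // divr_ge0 // ltW.
have K2 : 3 * (btn h)%:R * m <= 6 * X * m.
  by apply: ler_wpM2r => //; lra.
have : a * X / 2 <= 6 * X * m.
  have : a * X - 3 * T%:R <= 6 * X * m := le_trans K K2.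
  lra.
move=> H; nra.
Qed.
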